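(* Let $f:\mathbb{R}\to\mathbb{R}\cup\{\pm\infty\}$ be a proper concave function such that $f(\delta)\le0$ and $\partial f(\delta)\cap\mathbb{R}_{<0}\ne\emptyset$ for some $\delta\in\operatorname{dom}(f)$, and such that $f$ has a root or attains its maximum; let $\delta^*:=\max(\{\delta:f(\delta)=0\}\cup\operatorname{argmax}f)$. Run the (standard) Newton–Dinkelbach method described in the context. Then for every iteration $i\ge2$, $D_f(\delta^*,\delta^{(i)})\le D_f(\delta^*,\delta^{(i-1)})$, and equality holds if and only if $g^{(i-1)}=\inf_{g\in\partial f(\delta^{(i-1)})}g$ and $f(\delta^{(i)})=0$.
   Context: $\operatorname{dom}(f):=\{x:-\infty<f(x)<\infty\}$; $\partial f(x_0):=\{g: f(x)\le f(x_0)+g(x-x_0)\ \forall x\in\mathbb{R}\}$. Bregman divergence: $D_f(\delta',\delta):=f(\delta)+\sup_{g\in\partial f(\delta)}g(\delta'-\delta)-f(\delta')$ if $\delta\ne\delta'$, and $0$ if $\delta=\delta'$ (for $\delta,\delta'\in\operatorname{dom}(f)$, $\partial f(\delta)\ne\emptyset$). Newton–Dinkelbach method: input $\delta^{(1)}\in\operatorname{dom}(f)$, $g^{(1)}\in\partial f(\delta^{(1)})$ with $f(\delta^{(1)})\le0$, $g^{(1)}<0$. At iteration $i$: if $f(\delta^{(i)})=0$ return $\delta^{(i)}$; otherwise $\delta:=\delta^{(i)}-f(\delta^{(i)})/g^{(i)}$ and some $g\in\partial f(\delta)$ from an oracle; if $f(\delta)=-\infty$, or $f(\delta)<0$ and $g\ge0$,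 report no root; otherwise $\delta^{(i+1)}:=\delta$, $g^{(i+1)}:=g$. *)

(* Defs.v *)
From HB Require Import structures.
From mathcomp Require Import all_boot all_order all_algebra.
From mathcomp Require Import all_classical all_reals ereal.
Set Implicit Arguments. Unset Strict Implicit. Unset Printing Implicit Defensive.
Import Order.TTheory GRing.Theory Num.Theory.
Local Open Scope classical_set_scope.
Local Open Scope ring_scope.

Section ND.
Variable R : realType.
Implicit Types (f : R -> \bar R).

Definition edom f : set R := [set x | f x \is a fin_num].

(* Concave (hypograph-convex) extended-real-valued function; the endpoint
   cases t = 0, 1 are trivial and omitted. *)
Definition econcave f : Prop :=
  forall (x y t : R), (0 < t < 1)%R ->
    (t%:E * f x + ((1 - t)%R)%:E * f y <= f (t * x + (1 - t) * y)%R)%E.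

Definition eproper f : Prop :=
  (forall x, f x != +oo%E) /\ (exists x, f x != -oo%E).

Definition superdiff f (x0 : R) : set R :=
  [set g | forall x, (f x <= f x0 + (g * (x - x0))%:E)%E].

Definition bregman f (d' d : R) : \bar R :=
  if d == d' then 0%E
  else (f d + ereal_sup [set (g * (d' - d))%:E | g in superdiff f d] - f d')%E.

Definition argmax f : set R := [set x | forall y, (f y <= f x)%E].

(* One iteration j of Newton--Dinkelbach that does not terminate and produces
   delta^(j+1), g^(j+1) (g^(j+1) being an arbitrary oracle answer). *)
Definition ND_step f (d g : nat -> R) (j : nat) : Prop :=
  [/\ f (d j) != 0%E,
      d j.+1 = d j - fine (f (d j)) / g j,
      superdiff f (d j.+1) (g j.+1),
      f (d j.+1) != -oo%E &
      ~ ((f (d j.+1) < 0)%E /\ (0 <= g j.+1)%R)].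

Definition ND_run_upto f (d g : nat -> R) (i : nat) : Prop :=
  [/\ edom f (d 1%N), superdiff f (d 1%N) (g 1%N), (f (d 1%N) <= 0)%E,
      (g 1%N < 0)%R &
      forall j : nat, (1 <= j)%N -> (j < i)%N -> ND_step f d g j].

End ND.

(* Main.v *)
Require Import Defs.
From HB Require Import structures.
From mathcomp Require Import all_boot all_order all_algebra.
From mathcomp Require Import all_classical all_reals ereal.
From mathcomp Require Import ring lra.
Import Order.TTheory GRing.Theory Num.Theory.
Local Open Scope classical_set_scope.
Local Open Scope ring_scope.

Section Aux.
Variable R : realType.
Implicit Types (f : R -> \bar R).

Lemma sd_mono f (a b G h fa fb : R) : f a = fa%:E -> f b = fb%:E ->
  superdiff f a G -> superdiff f b h -> b < a -> G <= h.
Proof.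
move=> Ea Eb Ga Hb ba.
have := Ga b; have := Hb a; rewrite Ea Eb -!EFinD !lee_fin => h1 h2.
nra.
Qed.

Lemma inv_run f (d g : nat -> R) (i : nat) : eproper f -> ND_run_upto f d g i ->
  forall j, (1 <= j)%N -> (j < i)%N ->
  [/\ exists r, f (d j) = r%:E /\ r < 0, g j < 0 & superdiff f (d j) (g j)].
Proof.
move=> [fnoo _] [H1dom H1sd H1le H1g Hsteps].
elim=> [//|j IH] _ ji.
case: j IH ji => [_ ji|j IH ji].
  split=> //.
  have [Hne _ _ _ _] := Hsteps 1%N isT ji.
  move: H1dom H1le Hne; rewrite /edom /=.
  case: (f (d 1%N)) => [r| |] //= _; rewrite lee_fin => r0 rn0.
  by exists r; split=> //; rewrite lt_neqAle r0 andbT; apply: contraNN rn0 => /eqP ->.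
have jl : (j.+1 < i)%N by apply: ltn_trans ji.
have [[r [Er rneg]] gneg sd] := IH isT jl.
have [_ Hd Hsd Hnoo Hnot] := Hsteps j.+1 isT jl.
have [Hne _ _ _ _] := Hsteps j.+2 isT ji.
have le0 : (f (d j.+2) <= 0)%E.
  have := sd (d j.+2); rewrite Er Hd Er /= -EFinD => /le_trans; apply.
  rewrite lee_fin. have -> : g j.+1 * (d j.+1 - r / g j.+1 - d j.+1) = - r.
    by field; rewrite lt_eqF.
  by rewrite subrr.
have [r' Er'] : exists r', f (d j.+2) = r'%:E.
  move: (fnoo (d j.+2)) Hnoo; case: (f (d j.+2)) => [r'| |] //; by exists r'.
have r'neg : r' < 0.
  move: le0 Hne; rewrite Er' lee_fin => r0 rn0.
  by rewrite lt_neqAle r0 andbT; apply: contraNN rn0 => /eqP ->.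
split=> //; first by exists r'.
rewrite ltNge; apply/negP => g0; apply: Hnot; split=> //.
by rewrite Er' lte_fin.
Qed.

End Aux.
Arguments inv_run {R f d g i}.
Arguments sd_mono {R f a b G h fa fb}.

Theorem lemma3p3 (R : realType) (f : R -> \bar R) (dstar : R)
  (d g : nat -> R) (i : nat) :
  econcave f -> eproper f ->
  (exists2 x, edom f x & (f x <= 0)%E /\ exists2 h, superdiff f x h & h < 0) ->
  ((exists x, f x = 0%E) \/ (exists x, argmax f x)) ->
  ([set x | f x = 0%E] `|` argmax f) dstar ->
  (forall x, ([set x | f x = 0%E] `|` argmax f) x -> x <= dstar) ->
  (2 <= i)%N -> ND_run_upto f d g i ->
  (bregman f dstar (d i) <= bregman f dstar (d i.-1))%E /\
  (bregman f dstar (d i) = bregman f dstar (d i.-1) <->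
     ((g i.-1)%:E = ereal_inf [set h%:E | h in superdiff f (d i.-1)] /\
      f (d i) = 0%E)).
Proof.
move=> _ Hprop _ _ Hs Hmax Hi Hrun.
have Hinv := inv_run Hprop Hrun.
have [fnoo _] := Hprop.
case: Hrun => _ _ _ _ Hsteps.
case: i Hi Hsteps Hinv => [|[|k]] // _ Hsteps Hinv.
rewrite /=.
have [[fa [Efa faneg]] Gneg Gsd] := Hinv k.+1 isT (ltnSn _).
have [_ Hb Hgb Hbnoo Hnot] := Hsteps k.+1 isT (ltnSn _).
set a := d k.+1 in Efa Gsd Hb Hgb *.
set b := d k.+2 in Hb Hgb Hbnoo Hnot *.
set G := g k.+1 in Gneg Gsd Hb *.
set g' := g k.+2 in Hgb Hnot *.
set s := dstar in Hs Hmax *.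
rewrite Efa /= in Hb.
have eGb : G * (b - a) = - fa by rewrite Hb; field; rewrite lt_eqF.
have ba : b < a by nra.
have Gx : forall x, (f x <= (G * (x - b))%:E)%E.
  move=> x; have := Gsd x; rewrite Efa -EFinD.
  have -> : fa + G * (x - a) = G * (x - b) by nra.
  done.
have [fb Efb] : exists r, f b = r%:E.
  move: (fnoo b) Hbnoo; case: (f b) => [r| |] //; by exists r.
have fble0 : fb <= 0 by have := Gx b; rewrite Efb subrr mulr0 lee_fin.
have [fs Efs] : exists r, f s = r%:E.
  case: Hs => [->|Ham]; first by exists 0.
  have := Ham a; rewrite Efa; move: (fnoo s).
  case: (f s) => [r _ _| |]; [by exists r|by []|by []].
have sb : s <= b.
  rewrite leNgt; apply/negP => bs.
  have fsneg : fs < 0 by have := Gx s; rewrite Efs lee_fin; nra.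
  have Ham : argmax f s.
    case: Hs => // H0; move: H0; rewrite /= Efs => -[] fs0; lra.
  have := Ham b; rewrite Efb Efs lee_fin => fbfs.
  have g'neg : g' < 0.
    rewrite ltNge; apply/negP => g0; apply: Hnot; split => //; rewrite Efb lte_fin; lra.
  have := Hgb s; rewrite Efb Efs -EFinD lee_fin; nra.
rewrite /bregman (gt_eqF (le_lt_trans sb ba)).
have SaG : ((G * (s - a))%:E <= ereal_sup [set (h * (s - a))%:E | h in superdiff f a])%E.
  by apply: ereal_sup_ubound; exists G.
case: (ltP fb 0) => [fbneg|fbge].
  have g'neg : g' < 0.
    rewrite ltNge; apply/negP => g0; apply: Hnot; split => //; rewrite Efb lte_fin; lra.
  have low : (((G * (s - b)) - fs)%:E <= f a + ereal_sup [set (h * (s - a))%:E | h in superdiff f a] - f s)%E.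
    have -> : G * (s - b) - fs = (fa + G * (s - a)) - fs by nra.
    rewrite Efa Efs EFinB EFinD; apply: leeB => //; exact: leeD2l.
  have up : ((if b == s then 0 else f b + ereal_sup [set (h * (s - b))%:E | h in superdiff f b] - f s) < ((G * (s - b)) - fs)%:E)%E.
    case: (ltgtP b s) => [bs|sb'|bs].
    - by move: sb; rewrite leNgt bs.
    - have Sb : (ereal_sup [set (h * (s - b))%:E | h in superdiff f b] <= (G * (s - b))%:E)%E.
        apply: ge_ereal_sup => _ [h Hh <-]; rewrite lee_fin.
        have := sd_mono Efa Efb Gsd Hh ba; nra.
      apply: (@le_lt_trans _ _ ((fb + G * (s - b)) - fs)%:E).
        rewrite Efb Efs EFinB EFinD; apply: leeB => //; exact: leeD2l.
      rewrite lte_fin; lra.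
    - rewrite lte_fin; move: Efs; rewrite -bs Efb => -[<-]; rewrite subrr mulr0; lra.
  have lt := lt_le_trans up low.
  split; first exact: ltW.
  split => [E|[_ fb0]]; exfalso.
    by move: lt; rewrite E ltxx.
  by move: fb0; rewrite Efb => -[] fb0; lra.
have fb0 : fb = 0 by lra.
have sbe : s = b.
  apply/le_anti; rewrite sb /=; apply: Hmax; left; by rewrite /= Efb fb0.
have fs0 : f s = 0%E by rewrite sbe Efb fb0.
rewrite -sbe eqxx fs0 sube0.
have eGs : fa + G * (s - a) = 0 by rewrite sbe; lra.
split.
  apply: le_trans (leeD2l _ SaG); by rewrite Efa -EFinD eGs.
split.
  move=> E.
  have Gmin : forall h, superdiff f a h -> G <= h.
    move=> h Hh.
    have : ((h * (s - a))%:E <= ereal_sup [set (h * (s - a))%:E | h in superdiff f a])%E.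
      by apply: ereal_sup_ubound; exists h.
    move=> /(leeD2l (f a)); rewrite -E Efa -EFinD lee_fin; nra.
  split; last by [].
  apply/le_anti/andP; split.
    by apply: le_ereal_inf_tmp => _ [h Hh <-]; rewrite lee_fin; exact: Gmin.
  by apply: ge_ereal_inf; exists G%:E => //; exists G.
move=> [Hinf _].
have Gmin : forall h, superdiff f a h -> G <= h.
  move=> h Hh; rewrite -lee_fin Hinf; apply: ereal_inf_lbound; by exists h.
have Sa : (ereal_sup [set (h * (s - a))%:E | h in superdiff f a] = (G * (s - a))%:E)%E.
  apply/le_anti/andP; split => //.
  apply: ge_ereal_sup => _ [h Hh <-]; rewrite lee_fin.
  have := Gmin h Hh; nra.
by rewrite Sa Efa -EFinD eGs.
Qed.
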